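(* Let $\mathcal{D}\subseteq\mathbb{C}$ and let $F:\mathcal{D}\rightarrow M_{n\times n}(\mathbb{C})$ be defined by $F(x)=\sum_{k=0}^{p}A_k x^k$, where $A_k\in M_{n\times n}(\mathbb{C})$ for $k=0,1,\dots,p$. Let $\mathcal{Z}(\mathcal{D})=\{x\in\mathcal{D} : F(x) \text{ has a repeated eigenvalue}\}$. Then either $\mathcal{Z}(\mathcal{D})=\mathcal{D}$ or $\mathcal{Z}(\mathcal{D})$ is finite.
   Context: $M_{n\times n}(\mathbb{C})$ denotes the set of $n\times n$ complex matrices. A matrix has a repeated eigenvalue if some eigenvalue has algebraic multiplicity at least $2$. *)

(* Defs.v *)
From HB Require Import structures.
From mathcomp Require Import all_boot all_order all_algebra.
From mathcomp Require Import complex.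
From mathcomp Require Import classical_sets cardinality reals.
Set Implicit Arguments. Unset Strict Implicit. Unset Printing Implicit Defensive.
Import Order.TTheory GRing.Theory Num.Theory.
Local Open Scope ring_scope.

Definition has_repeated_eigenvalue (K : fieldType) (n : nat) (M : 'M[K]_n) : Prop :=
  exists a : K, (1 < mup a (char_poly M))%N.

Definition mxpoly_eval (K : fieldType) (n p : nat) (A : 'I_p.+1 -> 'M[K]_n) (x : K)
  : 'M[K]_n := \sum_(k < p.+1) x ^+ k *: A k.

(* Main.v *)
Require Import Defs.
From HB Require Import structures.
From mathcomp Require Import all_boot all_order all_algebra.
From mathcomp Require Import complex.
From mathcomp Require Import classical_sets cardinality reals.
Import Order.TTheory GRing.Theory Num.Theory.
Local Open Scope ring_scope.
Local Open Scope classical_set_scope.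


Section Key.
Variable C : closedFieldType.

Lemma rep_res (q : {poly C}) : q != 0 ->
  (exists a, (1 < mup a q)%N) <-> resultant q q^`() = 0.
Proof.
move=> q0; split.
  case=> a; rewrite mup_geq // => /dvdpP [r Eq].
  apply/eqP; rewrite resultant_eq0.
  apply: (@root_size_gt1 _ a).
    by rewrite gcdp_eq0 negb_and q0.
  rewrite root_gcd Eq; apply/andP; split.
    by rewrite rootM; apply/orP; right; rewrite rootE horner_exp !hornerE subrr expr0n.
  rewrite derivM !rootE !hornerE.
  rewrite (_ : ('X - a%:P) ^+ 2 = ('X - a%:P) * ('X - a%:P)) ?expr2 // derivM derivXsubC !hornerE subrr.
  by rewrite /= !mulr0 !add0r subrr mulr0.
move/eqP; rewrite resultant_eq0 => H1.
have : size (gcdp q q^`()) != 1%N by rewrite neq_ltn H1 orbT.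
case/closed_rootP => a.
rewrite root_gcd => /andP [/factor_theorem [r Er] ].
rewrite Er derivM derivXsubC mulr1 rootE !hornerE subrr mulr0 add0r => /factor_theorem [s Es].
exists a; rewrite -Er mup_geq // Er Es -mulrA -expr2 dvdp_mull //.
Qed.
End Key.
Lemma lead_deriv (S : nzRingType) (q : {poly S}) n :
  q \is monic -> size q = n.+2 -> (n.+1)%:R != 0 :> S ->
  lead_coef q^`() = (n.+1)%:R.
Proof.
move=> mq sq nz.
have c : q^`()`_n = (n.+1)%:R.
  by rewrite coef_deriv -[q`_n.+1]/(q`_(n.+2).-1) -sq -lead_coefE (monicP mq).
have sd : size q^`() = n.+1.
  apply/eqP; rewrite eqn_leq -ltnS -sq lt_size_deriv ?monic_neq0 //=.
  rewrite ltnNge; apply/negP => /(nth_default 0) E.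
  by move: nz; rewrite -c E eqxx.
by rewrite lead_coefE sd.
Qed.

Theorem theorem3p3 (R : realType) (n p : nat) (A : 'I_p.+1 -> 'M[R[i]]_n)
    (D : set R[i]) :
  let Z := [set x | D x /\ has_repeated_eigenvalue (mxpoly_eval A x)] in
  Z = D \/ finite_set Z.
Proof.
move=> Z.
case: n A @Z => [|n] A Z.
  right; apply: (@sub_finite_set _ _ set0); last exact: finite_set0.
  move=> x [_ [a]]; set q := char_poly _.
  have q0 : q != 0 by rewrite monic_neq0 // char_poly_monic.
  rewrite mup_geq // => /(dvdp_leq q0).
  by rewrite size_exp_XsubC size_char_poly.
pose C := R[i].
pose MP : 'M[{poly C}]_n.+1 := \matrix_(i, j) \sum_(k < p.+1) (A k i j)%:P * 'X^k.
have EM : forall x : C, map_mx (horner_eval x) MP = mxpoly_eval A x.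
  move=> x; apply/matrixP => i j; rewrite !mxE summxE.
  rewrite horner_evalE horner_sum.
  apply: eq_bigr => k _; rewrite !mxE !hornerE.
  by rewrite mulrC.
pose chiP := char_poly MP.
pose Res := resultant chiP chiP^`().
have ER : forall x : C, Res.[x] = resultant (char_poly (mxpoly_eval A x)) (char_poly (mxpoly_eval A x))^`().
  move=> x; rewrite -horner_evalE /Res map_resultant.
  - by rewrite -deriv_map map_char_poly EM.
  - by rewrite (monicP (char_poly_monic _)) rmorph1 oner_eq0.
  - rewrite (@lead_deriv _ _ n) ?char_poly_monic ?size_char_poly //.
      by rewrite rmorph_nat pnatr_eq0.
    by rewrite -polyC_natr polyC_eq0 pnatr_eq0.
have chi0 : forall x : C, char_poly (mxpoly_eval A x) != 0.
  by move=> x; rewrite monic_neq0 // char_poly_monic.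
have [R0|Rn0] := eqVneq Res 0.
  left; apply/seteqP; split => x; first by case.
  move=> Dx; split => //; apply: (proj2 (@rep_res _ _ (chi0 x))).
  by rewrite -ER R0 horner0.
right; have [r Er] := closed_field_poly_normal Res.
apply: (@sub_finite_set _ _ [set` r]); last exact: finite_seq.
move=> x [_ /(@rep_res _ _ (chi0 x))]; rewrite -ER => /eqP rx.
have : root Res x by [].
by rewrite Er rootZ ?lead_coef_eq0 // root_prod_XsubC.
Qed.
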